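(* Let $V=x\partial_x+y\partial_y$ on $\mathrm{SL}(2,\mathbb R)$. (1) The only $\mathcal N$-invariant $V$-translators are the surfaces $\Sigma_{\theta_0}$ and the surfaces parametrized by $(s,t)\mapsto (t,y(s),\theta(s))$ with generating curve $\alpha(s)=(y(s),\theta(s))=\big(c(1+\cos(\sqrt2(s-s_0))),\,s\big)$, where $c>0$, $s_0\in\mathbb R$ (and $\frac{s-s_0}{\sqrt2}\in(-\frac\pi2,\frac\pi2)$). (2) The only $\mathcal A$-invariant $V$-translators are the surfaces $\Sigma_{\theta_0}$ and the surface $\Sigma_{x_0}$ with $x_0=0$. (3) Let $\Sigma$ be a rotational surface whose generating curve $\alpha(s)=(x(s),y(s))$ satisfies $x'=2y\cos\varphi$, $y'=2y\sin\varphi$. If $\Sigma$ is a $V$-translator, then $$\varphi'=-\frac{y\cos\varphi+x\sin\varphi}{y}.$$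
   Context: $\mathrm{SL}(2,\mathbb R)$ is given global coordinates $(x,y,\theta)\in\mathbb R\times(0,\infty)\times\mathbb R$ via $(x,y,\theta)\mapsto \begin{pmatrix}1&x\\0&1\end{pmatrix}\begin{pmatrix}\sqrt y&0\\0&1/\sqrt y\end{pmatrix}\begin{pmatrix}\cos\theta&\sin\theta\\-\sin\theta&\cos\theta\end{pmatrix}$, with the metric $\langle\,,\rangle=\frac{dx^2+dy^2}{4y^2}+\left(d\theta+\frac{dx}{2y}\right)^2$. Orthonormal frame: $e_1=2y\partial_x-\partial_\theta$, $e_2=2y\partial_y$, $e_3=\partial_\theta$; the Killing field $V=x\partial_x+y\partial_y$ equals $\frac{1}{2y}(xe_1+ye_2+xe_3)$. A surface with unit normal $N$ and mean curvature $H$ (average of principal curvatures w.r.t. $N$) is a $V$-translator if $H=\langle N,V\rangle$. $\mathcal N$-invariant surfaces: parametrized as $(s,t)\mapsto(t,y(s),\theta(s))$; $N=\frac{y'}{\sqrt2\Phi}(e_1-e_3)+\frac{\sqrt2 y\theta'}{\Phi}e_2$, $H=\frac{\sqrt2 y^2}{\Phi^3}(\theta'y''-y'\theta''+2y\theta'^3)$, $\Phi=\sqrt{y'^2+2y^2\theta'^2}$. $\mathcal A$-invariant surfaces: parametrized as $(s,t)\mapsto(x(s),t,\theta(s))$, $t>0$; $N=\frac1\Phi(-(x'+2t\theta')e_1+x'e_3)$, $H=\frac{2t^2}{\Phi^3}(x'\theta''-\theta'x'')$, $\Phi=\sqrt{(x'+2t\theta')^2+x'^2}$. Rotational surfaces: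 parametrized as $(s,t)\mapsto(x(s),y(s),t)$; when $x'=2y\cos\varphi$, $y'=2y\sin\varphi$, $N=-\sin\varphi\,e_1+\cos\varphi\,e_2$ and $H=\frac{\varphi'}{2}+\cos\varphi$. $\Sigma_{x_0}=\{x=x_0\}$, $\Sigma_{\theta_0}=\{\theta=\theta_0\}$ for constants $x_0,\theta_0$. *)

(* Defs.v *)
From Stdlib Require Import Reals.
From Coquelicot Require Import Coquelicot.
Open Scope R_scope.

(** Tangent vectors of SL(2,R) are written by their components in the
    orthonormal frame (e1, e2, e3); the metric is then the Euclidean dot
    product of the components. *)
Definition vec3 : Type := (R * R * R)%type.

Definition dot3 (u v : vec3) : R :=
  let '(u1, u2, u3) := u in let '(v1, v2, v3) := v in u1 * v1 + u2 * v2 + u3 * v3.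

(** The Killing field V = x d_x + y d_y = (1/(2y)) (x e1 + y e2 + x e3)
    at the point with coordinates (x, y, theta). *)
Definition Vfield (x y : R) : vec3 := (x / (2 * y), y / (2 * y), x / (2 * y)).

Definition inI (a b : Rbar) (s : R) : Prop := Rbar_lt a s /\ Rbar_lt s b.

(** ---------- N-invariant surfaces (s,t) |-> (t, y(s), theta(s)) ---------- *)
Definition PhiN (y th : R -> R) (s : R) : R :=
  sqrt (Derive y s ^ 2 + 2 * y s ^ 2 * Derive th s ^ 2).

Definition NormalN (y th : R -> R) (s : R) : vec3 :=
  ( Derive y s / (sqrt 2 * PhiN y th s),
    sqrt 2 * y s * Derive th s / PhiN y th s,
    - (Derive y s / (sqrt 2 * PhiN y th s)) ).

Definition HN (y th : R -> R) (s : R) : R :=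
  sqrt 2 * y s ^ 2 / PhiN y th s ^ 3 *
  (Derive th s * Derive (Derive y) s - Derive y s * Derive (Derive th) s
   + 2 * y s * Derive th s ^ 3).

Definition regularN (a b : Rbar) (y th : R -> R) : Prop :=
  forall s, inI a b s ->
    ex_derive y s /\ ex_derive (Derive y) s /\
    ex_derive th s /\ ex_derive (Derive th) s /\
    0 < y s /\ 0 < PhiN y th s.

Definition translatorN (a b : Rbar) (y th : R -> R) : Prop :=
  forall s t, inI a b s -> HN y th s = dot3 (NormalN y th s) (Vfield t (y s)).

(** ---------- A-invariant surfaces (s,t) |-> (x(s), t, theta(s)), t > 0 ---------- *)
Definition PhiA (x th : R -> R) (s t : R) : R :=
  sqrt ((Derive x s + 2 * t * Derive th s) ^ 2 + Derive x s ^ 2).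

Definition NormalA (x th : R -> R) (s t : R) : vec3 :=
  ( - (Derive x s + 2 * t * Derive th s) / PhiA x th s t,
    0,
    Derive x s / PhiA x th s t ).

Definition HA (x th : R -> R) (s t : R) : R :=
  2 * t ^ 2 / PhiA x th s t ^ 3 *
  (Derive x s * Derive (Derive th) s - Derive th s * Derive (Derive x) s).

Definition regularA (a b : Rbar) (x th : R -> R) : Prop :=
  forall s, inI a b s ->
    ex_derive x s /\ ex_derive (Derive x) s /\
    ex_derive th s /\ ex_derive (Derive th) s /\
    (forall t, 0 < t -> 0 < PhiA x th s t).

Definition translatorA (a b : Rbar) (x th : R -> R) : Prop :=
  forall s t, inI a b s -> 0 < t ->
    HA x th s t = dot3 (NormalA x th s t) (Vfield (x s) t).

(** ---------- Rotational surfaces (s,t) |-> (x(s), y(s), t) ---------- *)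
(** With x' = 2y cos phi, y' = 2y sin phi:
    N = -sin phi e1 + cos phi e2,  H = phi'/2 + cos phi. *)
Definition NormalR (phi : R -> R) (s : R) : vec3 := (- sin (phi s), cos (phi s), 0).

Definition HR (phi : R -> R) (s : R) : R := Derive phi s / 2 + cos (phi s).

Definition translatorR (a b : Rbar) (x y phi : R -> R) : Prop :=
  forall s (t : R), inI a b s -> HR phi s = dot3 (NormalR phi s) (Vfield (x s) (y s)).

(* Main.v *)
Require Import Defs.
From Stdlib Require Import Reals Lra Classical.
From Coquelicot Require Import Coquelicot.
Open Scope R_scope.

Lemma inI_loc a b s : inI a b s -> locally s (fun u => inI a b u).
Proof.
  intros [H1 H2].
  pose proof (open_Rbar_gt' (Finite s) a H1) as L1.
  pose proof (open_Rbar_lt' (Finite s) b H2) as L2.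
  simpl in L1, L2.
  generalize (filter_and _ _ L1 L2). apply filter_imp. intros u [? ?]; split; auto.
Qed.

Lemma inI_between a b s1 s2 u : inI a b s1 -> inI a b s2 ->
  Rmin s1 s2 <= u <= Rmax s1 s2 -> inI a b u.
Proof.
  intros [A1 B1] [A2 B2] [H1 H2]; split.
  - destruct a as [a| |]; simpl in *; auto.
    apply Rlt_le_trans with (Rmin s1 s2); auto.
    unfold Rmin; destruct Rle_dec; lra.
  - destruct b as [b| |]; simpl in *; auto.
    apply Rle_lt_trans with (Rmax s1 s2); auto.
    unfold Rmax; destruct Rle_dec; lra.
Qed.

Lemma const_on a b (f : R -> R) :
  (forall s, inI a b s -> is_derive f s 0) ->
  forall s1 s2, inI a b s1 -> inI a b s2 -> f s1 = f s2.
Proof.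
  intros Hd s1 s2 I1 I2.
  destruct (MVT_gen f s1 s2 (fun _ => 0)) as [c [_ Hc]].
  - intros u Hu. apply Hd. apply (inI_between a b s1 s2); auto; lra.
  - intros u Hu. apply continuity_pt_filterlim.
    apply (ex_derive_continuous (K:=R_AbsRing) (V:=R_NormedModule) f). exists 0. apply Hd.
    apply (inI_between a b s1 s2); auto.
  - lra.
Qed.

Lemma Derive_loc_const a b (f : R -> R) c s :
  (forall u, inI a b u -> f u = c) -> inI a b s -> Derive f s = 0.
Proof.
  intros Hf Hs. rewrite (Derive_ext_loc f (fun _ => c)).
  - apply Derive_const.
  - generalize (inI_loc a b s Hs). apply filter_imp. auto.
Qed.

Lemma Derive2_loc_const a b (f : R -> R) c s :
  (forall u, inI a b u -> f u = c) -> inI a b s -> Derive (Derive f) s = 0.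
Proof.
  intros Hf Hs. rewrite (Derive_ext_loc (Derive f) (fun _ => 0)).
  - apply Derive_const.
  - generalize (inI_loc a b s Hs). apply filter_imp. intros u Hu.
    apply (Derive_loc_const a b f c); auto.
Qed.

Lemma loc_neq0 (f : R -> R) s : continuous f s -> f s <> 0 ->
  locally s (fun u => f u <> 0).
Proof.
  intros Hc Hn. apply (Hc (fun v => v <> 0)).
  assert (Hp : 0 < Rabs (f s)) by (apply Rabs_pos_lt; auto).
  exists (mkposreal _ Hp). intros v Hv Hv0.
  unfold ball in Hv; simpl in Hv; unfold AbsRing_ball, abs, minus, plus, opp in Hv; simpl in Hv.
  rewrite Hv0 in Hv. rewrite Rplus_0_l, Rabs_Ropp in Hv. lra.
Qed.

Lemma ivt_help (g : R -> R) s1 s2 :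
  (forall u, Rmin s1 s2 <= u <= Rmax s1 s2 -> continuity_pt g u) ->
  g s1 < 0 -> 0 < g s2 -> exists z, Rmin s1 s2 <= z <= Rmax s1 s2 /\ g z = 0.
Proof.
  intros Hc H1 H2.
  destruct (Rle_lt_dec s1 s2) as [Hl|Hl].
  - destruct (Rle_lt_or_eq_dec _ _ Hl) as [Hl'|Heq]; [|subst; lra].
    rewrite Rmin_left, Rmax_right in * by lra.
    destruct (Ranalysis5.IVT_interv g s1 s2) as [z Hz]; auto. exists z; auto.
  - rewrite Rmin_right, Rmax_left in * by lra.
    destruct (Ranalysis5.IVT_interv (fun u => - g u) s2 s1) as [z Hz]; auto; try lra.
    + intros u Hu. apply continuity_pt_opp. auto.
    + exists z. split; [tauto| lra].
Qed.
Lemma part3 : forall (a b : Rbar) (x y phi : R -> R),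
      (forall s, inI a b s ->
         ex_derive x s /\ ex_derive y s /\ ex_derive phi s /\ 0 < y s /\
         Derive x s = 2 * y s * cos (phi s) /\
         Derive y s = 2 * y s * sin (phi s)) ->
      translatorR a b x y phi ->
      forall s, inI a b s ->
        Derive phi s = - ((y s * cos (phi s) + x s * sin (phi s)) / y s).
Proof.
  intros a b x y phi Hreg Htr s Hs. destruct (Hreg s Hs) as (_&_&_&Hy&_&_).
  specialize (Htr s 0 Hs). unfold HR, dot3, NormalR, Vfield in Htr.
  assert (E: Derive phi s = 2 * (-sin(phi s)*(x s/(2*y s)) + cos(phi s)*(y s/(2*y s)) + 0*(x s/(2*y s)) - cos(phi s))) by lra.
  rewrite E. field. lra.
Qed.

Lemma sqrt_pos_ne (u : R) : 0 < sqrt u -> 0 < u.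
Proof.
  intros H. destruct (Rlt_or_le 0 u) as [h|h]; auto.
  rewrite sqrt_neg_0 in H; lra.
Qed.

Lemma part2a : forall (a b : Rbar) (x th : R -> R) (th0 : R),
        regularA a b x th -> (forall s, inI a b s -> th s = th0) ->
        translatorA a b x th.
Proof.
  intros a b x th th0 Hreg Hc s t Hs Ht.
  unfold HA, dot3, NormalA, Vfield.
  rewrite (Derive_loc_const a b th th0 s), (Derive2_loc_const a b th th0 s); auto.
  destruct (Hreg s Hs) as (_&_&_&_&HP). specialize (HP t Ht).
  field. split; lra.
Qed.

Lemma part2b : forall (a b : Rbar) (x th : R -> R),
        regularA a b x th -> (forall s, inI a b s -> x s = 0) ->
        translatorA a b x th.
Proof.
  intros a b x th Hreg Hc s t Hs Ht.
  unfold HA, dot3, NormalA, Vfield.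
  rewrite (Derive_loc_const a b x 0 s), (Derive2_loc_const a b x 0 s), (Hc s Hs); auto.
  destruct (Hreg s Hs) as (_&_&_&_&HP). specialize (HP t Ht).
  field. split; lra.
Qed.

Lemma coefA a b x th s : regularA a b x th -> translatorA a b x th -> inI a b s ->
  Derive th s * x s * Derive x s ^ 2 = 0 /\
  Derive x s * Derive (Derive th) s - Derive th s * Derive (Derive x) s
    = - 2 * Derive th s ^ 3 * x s /\
  0 < Derive x s ^ 2 + Derive th s ^ 2.
Proof.
  intros Hreg Htr Hs.
  destruct (Hreg s Hs) as (_&_&_&_&HP).
  set (p := Derive th s). set (q := Derive (Derive th) s).
  set (a0 := Derive x s). set (b0 := Derive (Derive x) s).
  assert (key : forall t, 0 < t ->
     2 * t^2 * (a0 * q - p * b0) = - p * x s * ((a0 + 2*t*p)^2 + a0^2)).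
  { intros t Ht. specialize (Htr s t Hs Ht). specialize (HP t Ht).
    unfold HA, dot3, NormalA, Vfield in Htr. unfold PhiA in *. fold p q a0 b0 in Htr, HP.
    set (F := sqrt ((a0 + 2 * t * p) ^ 2 + a0 ^ 2)) in *.
    assert (F2 : F * F = (a0 + 2 * t * p) ^ 2 + a0 ^ 2).
    { unfold F. apply sqrt_sqrt. nra. }
    rewrite <- F2.
    apply Rmult_eq_reg_r with (/ (F^3)).
    2:{ apply Rinv_neq_0_compat. apply pow_nonzero. lra. }
    replace (2 * t ^ 2 * (a0 * q - p * b0) * / F ^ 3) with (2 * t ^ 2 / F ^ 3 * (a0 * q - p * b0)) by (field; lra).
    rewrite Htr. field. split; lra. }
  assert (k1 := key 1 Rlt_0_1).
  assert (k2 := key 2 ltac:(lra)).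
  assert (k3 := key 3 ltac:(lra)).
  split; [|split].
  - nra.
  - nra.
  - specialize (HP 1 Rlt_0_1). unfold PhiA in HP. fold p a0 in HP.
    destruct (Rle_lt_dec (a0^2 + p^2) 0) as [h|h]; auto.
    assert (a0 = 0) by nra. assert (p = 0) by nra.
    rewrite H, H0 in HP. replace ((0 + 2 * 1 * 0) ^ 2 + 0 ^ 2) with 0 in HP by ring.
    rewrite sqrt_0 in HP. lra.
Qed.
Lemma part2c : forall (a b : Rbar) (x th : R -> R),
        Rbar_lt a b -> regularA a b x th -> translatorA a b x th ->
        (exists th0 : R, forall s, inI a b s -> th s = th0)
        \/
        (forall s, inI a b s -> x s = 0).
Proof.
  intros a b x th _ Hreg Htr.
  assert (PX : forall s, inI a b s -> Derive th s * x s = 0).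
  { intros s Hs. apply NNPP; intro Hn.
    destruct (Hreg s Hs) as (Hx&Hx2&Ht&Ht2&_).
    assert (Hc : continuous (fun u => Derive th u * x u) s).
    { apply (ex_derive_continuous (K:=R_AbsRing) (V:=R_NormedModule)).
      apply ex_derive_mult; auto. }
    assert (L := filter_and _ _ (loc_neq0 _ s Hc Hn) (inI_loc a b s Hs)).
    assert (Z : locally s (fun u => Derive x u = 0)).
    { generalize L. apply filter_imp. intros u [H1 H2].
      destruct (coefA a b x th u Hreg Htr H2) as (C1&_&_).
      assert (Derive x u ^ 2 = 0).
      { apply Rmult_eq_reg_l with (Derive th u * x u); auto. lra. }
      nra. }
    assert (B0 : Derive (Derive x) s = 0).
    { rewrite (Derive_ext_loc _ (fun _ => 0) s Z). apply Derive_const. }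
    assert (A0 : Derive x s = 0).
    { apply locally_singleton in Z. auto. }
    destruct (coefA a b x th s Hreg Htr Hs) as (_&C2&_).
    rewrite A0, B0 in C2.
    assert (Derive th s <> 0) by (intro h; apply Hn; rewrite h; ring).
    apply Hn. apply Rmult_eq_reg_l with (Derive th s ^ 2); [|apply pow_nonzero; auto].
    nra. }
  destruct (classic (exists s1, inI a b s1 /\ Derive th s1 <> 0)) as [[s1 [Hs1 Hp1]]|Hno].
  - right.
    set (a1 := Derive x s1). set (p1 := Derive th s1).
    set (k := fun s => (Derive x s * p1 - Derive th s * a1) / sqrt (Derive x s ^ 2 + Derive th s ^ 2)).
    assert (Kc : forall s, inI a b s -> is_derive k s 0).
    { intros s Hs.
      destruct (Hreg s Hs) as (Hx&Hx2&Ht&Ht2&_).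
      destruct (coefA a b x th s Hreg Htr Hs) as (_&C2&Pos).
      assert (D0 : Derive x s * Derive (Derive th) s - Derive th s * Derive (Derive x) s = 0).
      { rewrite C2. specialize (PX s Hs). replace (- 2 * Derive th s ^ 3 * x s) with (-2 * Derive th s ^2 * (Derive th s * x s)) by ring. rewrite PX. ring. }
      unfold k. auto_derive.
      - repeat split; auto; try nra; try (apply Rgt_not_eq; apply sqrt_lt_R0; nra).
      - set (S := sqrt (Derive x s ^ 2 + Derive th s ^ 2)).
        assert (SS : S * S = Derive x s ^ 2 + Derive th s ^ 2) by (apply sqrt_sqrt; lra).
        assert (Sp : 0 < S) by (apply sqrt_lt_R0; lra).
        change (Derive (fun x0 : R => Derive x x0) s) with (Derive (Derive x) s).
        change (Derive (fun x0 : R => Derive th x0) s) with (Derive (Derive th) s).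
        replace (Derive x s * (Derive x s * 1) + Derive th s * (Derive th s * 1)) with (Derive x s ^ 2 + Derive th s ^ 2) by ring.
        fold S.
        match goal with |- ?E = 0 => transitivity
          (((Derive (Derive x) s * p1 - Derive (Derive th) s * a1) * (S*S) -
            (Derive x s * p1 - Derive th s * a1) * (Derive x s * Derive (Derive x) s + Derive th s * Derive (Derive th) s)) / (S*S*S)) end.
        { field; lra. }
        rewrite SS. replace ((Derive (Derive x) s * p1 - Derive (Derive th) s * a1) *
    (Derive x s ^ 2 + Derive th s ^ 2) -
    (Derive x s * p1 - Derive th s * a1) *
    (Derive x s * Derive (Derive x) s + Derive th s * Derive (Derive th) s)) with
    (- (Derive x s * Derive (Derive th) s - Derive th s * Derive (Derive x) s) * (Derive th s * p1 + Derive x s * a1)) by ring.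
        rewrite D0. unfold Rdiv. ring. }
    intros s Hs.
    assert (Ek := const_on a b k Kc s s1 Hs Hs1).
    destruct (coefA a b x th s Hreg Htr Hs) as (_&_&Pos).
    assert (Sp : 0 < sqrt (Derive x s ^ 2 + Derive th s ^ 2)) by (apply sqrt_lt_R0; lra).
    assert (E0 : k s1 = 0) by (unfold k; fold a1 p1; unfold Rdiv; ring).
    rewrite E0 in Ek. unfold k in Ek.
    assert (E1 : Derive x s * p1 - Derive th s * a1 = 0).
    { apply Rmult_eq_reg_r with (/ sqrt (Derive x s ^ 2 + Derive th s ^ 2)).
      - rewrite Rmult_0_l. exact Ek.
      - apply Rinv_neq_0_compat; lra. }
    assert (Derive th s <> 0).
    { intro h. rewrite h in E1, Pos. assert (Derive x s = 0).
      { apply Rmult_eq_reg_r with p1; auto. lra. }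
      rewrite H in Pos. lra. }
    specialize (PX s Hs). apply Rmult_eq_reg_l with (Derive th s); auto. lra.
  - left. destruct (classic (exists s0, inI a b s0)) as [[s0 Hs0]|Hne].
    + exists (th s0). intros s Hs. apply (const_on a b th); auto.
      intros u Hu. destruct (Hreg u Hu) as (_&_&Ht&_).
      assert (Derive th u = 0) by (apply NNPP; intro; apply Hno; eauto).
      rewrite <- H. apply Derive_correct; auto.
    + exists 0. intros s Hs; exfalso; eauto.
Qed.
Lemma part1a : forall (a b : Rbar) (y th : R -> R) (th0 : R),
        regularN a b y th -> (forall s, inI a b s -> th s = th0) ->
        translatorN a b y th.
Proof.
  intros a b y th th0 Hreg Hc s t Hs.
  unfold HN, dot3, NormalN, Vfield.
  rewrite (Derive_loc_const a b th th0 s), (Derive2_loc_const a b th th0 s); auto.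
  unfold Rdiv. ring.
Qed.

Lemma cos_gt_m1 u : - PI < u < PI -> 0 < 1 + cos u.
Proof.
  intros H. replace u with (2 * (u/2)) by field. rewrite cos_2a_cos.
  assert (0 < cos (u/2)) by (apply cos_gt_0; lra). nra.
Qed.

Lemma sqrt2_pos : 0 < sqrt 2.
Proof. apply sqrt_lt_R0; lra. Qed.

Lemma part1b : forall c s0 : R, 0 < c ->
        let a := Finite (s0 - PI / sqrt 2) in
        let b := Finite (s0 + PI / sqrt 2) in
        let y := fun s => c * (1 + cos (sqrt 2 * (s - s0))) in
        let th := fun s : R => s in
        regularN a b y th /\ translatorN a b y th.
Proof.
  intros c s0 Hc a b y th.
  assert (R2 := sqrt2_pos).
  assert (Dy : forall s, Derive y s = - c * sqrt 2 * sin (sqrt 2 * (s - s0))).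
  { intros s. apply is_derive_unique. unfold y. auto_derive; auto. unfold Rminus; ring. }
  assert (Dy2 : forall s, is_derive (Derive y) s (- 2 * c * cos (sqrt 2 * (s - s0)))).
  { intros s. apply is_derive_ext with (fun s => - c * sqrt 2 * sin (sqrt 2 * (s - s0))).
    { intros; rewrite Dy; auto. }
    auto_derive; auto. replace (- 2 * c) with (- c * (sqrt 2 * sqrt 2)).
    unfold Rminus; ring. rewrite sqrt_sqrt; lra. }
  assert (Dt : forall s, Derive th s = 1).
  { intros s. apply Derive_id. }
  assert (Dt2 : forall s, Derive (Derive th) s = 0).
  { intros s. rewrite (Derive_ext _ (fun _ => 1)). apply Derive_const. auto. }
  assert (Ypos : forall s, inI a b s -> 0 < y s).
  { intros s [H1 H2]. unfold a, b in *; simpl in *. unfold y.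
    apply Rmult_lt_0_compat; auto. apply cos_gt_m1.
    assert (E : PI = sqrt 2 * (PI / sqrt 2)) by (field; lra).
    set (K := PI / sqrt 2) in *. rewrite E. split; nra. }
  assert (Ppos : forall s, inI a b s -> 0 < PhiN y th s).
  { intros s Hs. unfold PhiN. apply sqrt_lt_R0. rewrite Dt. specialize (Ypos s Hs). nra. }
  split.
  - intros s Hs. repeat split; auto.
    + exists (Derive y s). apply Derive_correct. unfold y. auto_derive; auto.
    + eexists; apply Dy2.
    + exists 1. unfold th. auto_derive; auto.
    + exists 0. apply is_derive_ext with (fun _ => 1). intros; rewrite Dt; auto. auto_derive; auto.
  - intros s t Hs. specialize (Ypos s Hs). specialize (Ppos s Hs).
    unfold HN, dot3, NormalN, Vfield.
    rewrite (is_derive_unique _ _ _ (Dy2 s)), Dt, Dt2.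
    set (F := PhiN y th s) in *.
    assert (F2 : F * F = Derive y s ^ 2 + 2 * y s ^ 2 * 1 ^ 2).
    { unfold F, PhiN. rewrite Dt. apply sqrt_sqrt.
      generalize (pow2_ge_0 (Derive y s)) (pow2_ge_0 (y s)). rewrite pow1. intros; lra. }
    assert (K : - 2 * c * cos (sqrt 2 * (s - s0)) = F * F / (2 * y s) - 2 * y s).
    { rewrite F2, Dy. unfold y in *.
      set (u := sqrt 2 * (s - s0)) in *.
      assert (S2 : sqrt 2 * sqrt 2 = 2) by (apply sqrt_sqrt; lra).
      assert (SC := sin2_cos2 u). unfold Rsqr in SC.
      assert (N : (- c * sqrt 2 * sin u) ^ 2 + 2 * (c * (1 + cos u)) ^ 2 * 1 ^ 2
                  = 2 * (c * (1 + cos u)) * (2 * c)).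
      { replace ((- c * sqrt 2 * sin u) ^ 2) with (c * c * (sqrt 2 * sqrt 2) * (sin u * sin u)) by ring.
        rewrite S2. replace (sin u * sin u) with (1 - cos u * cos u) by lra. ring. }
      rewrite N. field. split; [|lra]. intro h. rewrite h in Ypos. lra. }
    rewrite K. field. repeat split; lra.
Qed.
Lemma eqN a b y th s : regularN a b y th -> translatorN a b y th -> inI a b s ->
  2 * y s * (Derive th s * Derive (Derive y) s - Derive y s * Derive (Derive th) s + 2 * y s * Derive th s ^ 3)
  = Derive th s * (Derive y s ^ 2 + 2 * y s ^ 2 * Derive th s ^ 2).
Proof.
  intros Hreg Htr Hs. destruct (Hreg s Hs) as (_&_&_&_&Hy&HP).
  specialize (Htr s 0 Hs). unfold HN, dot3, NormalN, Vfield in Htr.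
  assert (R2 := sqrt2_pos).
  set (F := PhiN y th s) in *.
  assert (F2 : F * F = Derive y s ^ 2 + 2 * y s ^ 2 * Derive th s ^ 2).
  { unfold F, PhiN. apply sqrt_sqrt.
    generalize (pow2_ge_0 (Derive y s)) (pow2_ge_0 (y s)) (pow2_ge_0 (Derive th s)). intros; nra. }
  rewrite <- F2.
  set (K := Derive th s * Derive (Derive y) s - Derive y s * Derive (Derive th) s + 2 * y s * Derive th s ^ 3) in *.
  replace (2 * y s * K) with ((sqrt 2 * y s ^ 2 / F ^ 3 * K) * (2 * F ^ 3 / (sqrt 2 * y s))) by (field; repeat split; lra).
  rewrite Htr. field. repeat split; lra.
Qed.

Lemma Zderiv (y th : R -> R) s :
  ex_derive y s -> ex_derive th s -> ex_derive (Derive y) s -> ex_derive (Derive th) s ->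
  0 < y s -> 0 < Derive y s ^ 2 + 2 * y s ^ 2 * Derive th s ^ 2 ->
  2 * y s * (Derive th s * Derive (Derive y) s - Derive y s * Derive (Derive th) s + 2 * y s * Derive th s ^ 3)
  = Derive th s * (Derive y s ^ 2 + 2 * y s ^ 2 * Derive th s ^ 2) ->
  is_derive (fun u => 4 * y u * Derive th u ^ 2 /
     (Derive y u ^ 2 + 4 * y u * Derive th u ^ 2 + 2 * y u ^ 2 * Derive th u ^ 2)) s 0.
Proof.
  intros Hy Ht Hy2 Ht2 Hyp HP E.
  assert (Dp : 0 < Derive y s ^ 2 + 4 * y s * Derive th s ^ 2 + 2 * y s ^ 2 * Derive th s ^ 2).
  { generalize (pow2_ge_0 (Derive th s)); intros. nra. }
  auto_derive.
  - repeat split; auto. apply Rgt_not_eq; apply Rlt_gt; eapply Rlt_le_trans; [exact Dp| right; ring].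
  - change (Derive (fun x => Derive y x) s) with (Derive (Derive y) s).
    change (Derive (fun x => Derive th x) s) with (Derive (Derive th) s).
    change (Derive (fun x => y x) s) with (Derive y s).
    change (Derive (fun x => th x) s) with (Derive th s).
    set (p := Derive th s) in *. set (q := Derive (Derive th) s) in *.
    set (a := Derive y s) in *. set (b := Derive (Derive y) s) in *.
    set (Y := y s) in *.
    match goal with |- _ = 0 => transitivity
      (-(4*a*p*(2*Y*(p*b - a*q + 2*Y*p^3) - p*(a^2+2*Y^2*p^2))) /
       (a ^ 2 + 4 * Y * p ^ 2 + 2 * Y ^ 2 * p ^ 2)^2) end.
    + field. apply Rgt_not_eq; apply Rlt_gt; eapply Rlt_le_trans; [exact Dp| right; ring].
    + rewrite E. unfold Rdiv; ring.
Qed.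

Lemma ABderiv (y th : R -> R) s th1 :
  ex_derive y s -> ex_derive th s -> 0 < y s -> Derive th s <> 0 ->
  ex_derive (Derive y) s -> ex_derive (Derive th) s ->
  2 * y s * (Derive th s * Derive (Derive y) s - Derive y s * Derive (Derive th) s + 2 * y s * Derive th s ^ 3)
  = Derive th s * (Derive y s ^ 2 + 2 * y s ^ 2 * Derive th s ^ 2) ->
  is_derive (fun u => sqrt (y u) * cos ((th u - th1) / sqrt 2) - Derive y u / (sqrt 2 * sqrt (y u) * Derive th u) * sin ((th u - th1) / sqrt 2)) s 0
  /\
  is_derive (fun u => sqrt (y u) * sin ((th u - th1) / sqrt 2) + Derive y u / (sqrt 2 * sqrt (y u) * Derive th u) * cos ((th u - th1) / sqrt 2)) s 0.
Proof.
intros Hy Ht Hyp Hp Hy2 Ht2 E.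
assert (R2 : 0 < sqrt 2) by (apply sqrt_lt_R0; lra).
assert (Ry : 0 < sqrt (y s)) by (apply sqrt_lt_R0; lra).
assert (Eb : Derive (Derive y) s = (Derive y s^2 + 2 * y s^2 * Derive th s^2) / (2 * y s) + Derive y s * Derive (Derive th) s / Derive th s - 2 * y s * Derive th s^2).
{ apply Rmult_eq_reg_l with (2 * y s * Derive th s). 2: apply Rmult_integral_contrapositive; split; lra.
  field_simplify; try lra; try nra. }
assert (YY : y s = sqrt (y s) * sqrt (y s)) by (rewrite sqrt_sqrt; lra).
assert (S2 : sqrt 2 * sqrt 2 = 2) by (apply sqrt_sqrt; lra).
split; auto_derive.
- repeat split; auto; try lra. apply Rmult_integral_contrapositive; split; auto; apply Rmult_integral_contrapositive; split; lra.
- change (Derive (fun x => Derive y x) s) with (Derive (Derive y) s).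
  change (Derive (fun x => Derive th x) s) with (Derive (Derive th) s).
  change (Derive (fun x => y x) s) with (Derive y s).
  change (Derive (fun x => th x) s) with (Derive th s).
  rewrite Eb.
  set (p := Derive th s) in *. set (q := Derive (Derive th) s) in *.
  set (a := Derive y s) in *. 
  set (r := sqrt (y s)) in *. rewrite YY.
  set (t2 := sqrt 2) in *.
  field_simplify; [|repeat split; lra]. replace (t2 ^ 2) with 2 by (rewrite <- S2; ring). unfold Rdiv; ring.
- repeat split; auto; try lra. apply Rmult_integral_contrapositive; split; auto; apply Rmult_integral_contrapositive; split; lra.
- change (Derive (fun x => Derive y x) s) with (Derive (Derive y) s).
  change (Derive (fun x => Derive th x) s) with (Derive (Derive th) s).
  change (Derive (fun x => y x) s) with (Derive y s).
  change (Derive (fun x => th x) s) with (Derive th s).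
  rewrite Eb.
  set (p := Derive th s) in *. set (q := Derive (Derive th) s) in *.
  set (a := Derive y s) in *. 
  set (r := sqrt (y s)) in *. rewrite YY.
  set (t2 := sqrt 2) in *.
  field_simplify; [|repeat split; lra]. replace (t2 ^ 2) with 2 by (rewrite <- S2; ring). unfold Rdiv; ring.
Qed.

Lemma part1c : forall (a b : Rbar) (y th : R -> R),
        Rbar_lt a b -> regularN a b y th -> translatorN a b y th ->
        (exists th0 : R, forall s, inI a b s -> th s = th0)
        \/
        (exists c s0 : R, 0 < c /\
           forall s, inI a b s ->
             - (PI / 2) < (th s - s0) / sqrt 2 < PI / 2 /\
             y s = c * (1 + cos (sqrt 2 * (th s - s0)))).
Proof.
  intros a b y th _ Hreg Htr.
  assert (R2 := sqrt2_pos).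
  assert (S2 : sqrt 2 * sqrt 2 = 2) by (apply sqrt_sqrt; lra).
  assert (Info : forall s, inI a b s -> ex_derive y s /\ ex_derive (Derive y) s /\ ex_derive th s /\
     ex_derive (Derive th) s /\ 0 < y s /\ 0 < Derive y s ^ 2 + 2 * y s ^ 2 * Derive th s ^ 2 /\
     2 * y s * (Derive th s * Derive (Derive y) s - Derive y s * Derive (Derive th) s + 2 * y s * Derive th s ^ 3)
     = Derive th s * (Derive y s ^ 2 + 2 * y s ^ 2 * Derive th s ^ 2)).
  { intros s Hs. destruct (Hreg s Hs) as (H1&H2&H3&H4&H5&H6). repeat split; auto.
    - unfold PhiN in H6. apply sqrt_pos_ne in H6. exact H6.
    - apply (eqN a b); auto. }
  destruct (classic (exists s1, inI a b s1 /\ Derive th s1 <> 0)) as [[s1 [Hs1 Hp1]]|Hno].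
  2: { left. destruct (classic (exists s0, inI a b s0)) as [[s0 Hs0]|Hne].
    + exists (th s0). intros s Hs. apply (const_on a b th); auto.
      intros u Hu. destruct (Info u Hu) as (_&_&Ht&_).
      assert (Derive th u = 0) by (apply NNPP; intro; apply Hno; eauto).
      rewrite <- H. apply Derive_correct; auto.
    + exists 0. intros s Hs; exfalso; eauto. }
  right.
  pose (Z := fun u => 4 * y u * Derive th u ^ 2 /
     (Derive y u ^ 2 + 4 * y u * Derive th u ^ 2 + 2 * y u ^ 2 * Derive th u ^ 2)).
  assert (Zc : forall s, inI a b s -> Z s = Z s1).
  { intros s Hs. refine (const_on a b Z _ s s1 Hs Hs1). intros u Hu.
    destruct (Info u Hu) as (?&?&?&?&?&?&?). apply Zderiv; auto. }
  assert (Pnz : forall s, inI a b s -> Derive th s <> 0).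
  { intros s Hs h. destruct (Info s1 Hs1) as (_&_&_&_&Y1&P1&_).
    assert (Z s = 0) by (unfold Z; rewrite h; unfold Rdiv; ring).
    assert (0 < Z s1).
    { unfold Z. assert (0 < Derive th s1 ^2) by (apply pow2_gt_0; auto).
      apply Rdiv_lt_0_compat; nra. }
    rewrite <- (Zc s Hs) in H0. lra. }
  pose (th1 := th s1).
  pose (A := fun u => sqrt (y u) * cos ((th u - th1) / sqrt 2) - Derive y u / (sqrt 2 * sqrt (y u) * Derive th u) * sin ((th u - th1) / sqrt 2)).
  pose (B := fun u => sqrt (y u) * sin ((th u - th1) / sqrt 2) + Derive y u / (sqrt 2 * sqrt (y u) * Derive th u) * cos ((th u - th1) / sqrt 2)).
  assert (Ac : forall s, inI a b s -> A s = A s1).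
  { intros s Hs. refine (const_on a b A _ s s1 Hs Hs1). intros u Hu.
    destruct (Info u Hu) as (?&?&?&?&?&?&?). apply (proj1 (ABderiv y th u th1 H H1 H3 (Pnz u Hu) H0 H2 H5)). }
  assert (Bc : forall s, inI a b s -> B s = B s1).
  { intros s Hs. refine (const_on a b B _ s s1 Hs Hs1). intros u Hu.
    destruct (Info u Hu) as (?&?&?&?&?&?&?). apply (proj2 (ABderiv y th u th1 H H1 H3 (Pnz u Hu) H0 H2 H5)). }
  destruct (Info s1 Hs1) as (_&_&_&_&Y1&_&_).
  set (r1 := sqrt (y s1)).
  assert (Hr1 : 0 < r1) by (apply sqrt_lt_R0; auto).
  set (k1 := Derive y s1 / (sqrt 2 * r1 * Derive th s1)).
  assert (U0 : (th s1 - th1) / sqrt 2 = 0) by (unfold th1; field; lra).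
  assert (A1 : A s1 = r1) by (unfold A; rewrite U0, cos_0, sin_0; fold r1; ring).
  assert (B1 : B s1 = k1) by (unfold B; rewrite U0, cos_0, sin_0; fold r1; unfold k1; ring).
  assert (W : forall s, inI a b s -> sqrt (y s) = r1 * cos ((th s - th1) / sqrt 2) + k1 * sin ((th s - th1) / sqrt 2)).
  { intros s Hs. rewrite <- A1, <- B1, <- (Ac s Hs), <- (Bc s Hs). unfold A, B.
    set (u := (th s - th1) / sqrt 2).
    assert (SC := sin2_cos2 u). unfold Rsqr in SC.
    transitivity (sqrt (y s) * (sin u * sin u + cos u * cos u)); [rewrite SC; ring | ring]. }
  set (z := k1 / r1).
  set (be := atan z).
  set (Q := sqrt (1 + z ^ 2)).
  assert (HQ : 0 < Q) by (apply sqrt_lt_R0; generalize (pow2_ge_0 z); intros; lra).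
  assert (Cb : cos be = 1 / Q) by (unfold be, Q; rewrite cos_atan; unfold Rsqr; simpl; rewrite Rmult_1_r; auto).
  assert (Sb : sin be = z / Q) by (unfold be, Q; rewrite sin_atan; unfold Rsqr; simpl; rewrite Rmult_1_r; auto).
  set (Rr := r1 * Q).
  assert (HR : 0 < Rr) by (unfold Rr; nra).
  set (s0 := th1 + sqrt 2 * be).
  assert (G : forall s, (th s - s0) / sqrt 2 = (th s - th1) / sqrt 2 - be) by (intros; unfold s0; field; lra).
  assert (W2 : forall s, inI a b s -> sqrt (y s) = Rr * cos ((th s - s0) / sqrt 2)).
  { intros s Hs. rewrite G, cos_minus, Cb, Sb, W; auto. unfold Rr, z. field. split; lra. }
  assert (Gpos : forall s, inI a b s -> 0 < cos ((th s - s0) / sqrt 2)).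
  { intros s Hs. destruct (Info s Hs) as (_&_&_&_&Ys&_&_).
    assert (0 < sqrt (y s)) by (apply sqrt_lt_R0; auto).
    rewrite W2 in H; auto. nra. }
  assert (Gc : forall u, inI a b u -> continuity_pt (fun s => (th s - s0) / sqrt 2) u).
  { intros u Hu. destruct (Info u Hu) as (_&_&Ht&_).
    apply continuity_pt_filterlim.
    apply (ex_derive_continuous (K:=R_AbsRing) (V:=R_NormedModule) (fun s => (th s - s0) / sqrt 2)). auto_derive; auto; lra. }
  assert (G1 : (th s1 - s0) / sqrt 2 = - be) by (rewrite G, U0; ring).
  assert (Bb := atan_bound z). fold be in Bb.
  exists (Rr ^ 2 / 2), s0. split. { apply Rdiv_lt_0_compat; [apply pow_lt|]; lra. }
  intros s Hs. split.
  - split.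
    + destruct (Rlt_or_le (-(PI/2)) ((th s - s0) / sqrt 2)) as [ok|bad]; auto. exfalso.
      destruct (Rle_lt_or_eq_dec _ _ bad) as [lt|eq].
      * destruct (ivt_help (fun u => - ((th u - s0) / sqrt 2) - PI / 2) s1 s) as [zz [Hz1 Hz2]].
        { intros u Hu. apply continuity_pt_minus; [apply continuity_pt_opp|apply continuity_pt_const; intros ? ?; auto].
          apply Gc. apply (inI_between a b s1 s); auto. }
        { rewrite G1. lra. }
        { lra. }
        assert (Iz : inI a b zz) by (apply (inI_between a b s1 s); auto).
        assert (E : (th zz - s0) / sqrt 2 = - (PI / 2)) by lra.
        specialize (Gpos zz Iz). rewrite E, cos_neg, cos_PI2 in Gpos. lra.
      * specialize (Gpos s Hs). rewrite eq, cos_neg, cos_PI2 in Gpos. lra.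
    + destruct (Rlt_or_le ((th s - s0) / sqrt 2) (PI/2)) as [ok|bad]; auto. exfalso.
      destruct (Rle_lt_or_eq_dec _ _ bad) as [lt|eq].
      * destruct (ivt_help (fun u => (th u - s0) / sqrt 2 - PI / 2) s1 s) as [zz [Hz1 Hz2]].
        { intros u Hu. apply continuity_pt_minus; [|apply continuity_pt_const; intros ? ?; auto].
          apply Gc. apply (inI_between a b s1 s); auto. }
        { rewrite G1. lra. }
        { lra. }
        assert (Iz : inI a b zz) by (apply (inI_between a b s1 s); auto).
        assert (E : (th zz - s0) / sqrt 2 = PI / 2) by lra.
        specialize (Gpos zz Iz). rewrite E, cos_PI2 in Gpos. lra.
      * specialize (Gpos s Hs). rewrite <- eq, cos_PI2 in Gpos. lra.
  - destruct (Info s Hs) as (_&_&_&_&Ys&_&_).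
    assert (YY : y s = sqrt (y s) * sqrt (y s)) by (rewrite sqrt_sqrt; lra).
    rewrite YY, W2; auto.
    replace (sqrt 2 * (th s - s0)) with (2 * ((th s - s0) / sqrt 2)).
    2: { set (t2 := sqrt 2) in *. rewrite <- S2 at 1. field. lra. }
    rewrite cos_2a_cos. field.
Qed.
Theorem mainTheorem3 :
  (* (1) N-invariant V-translators *)
  ( (* Sigma_{theta0} (any piece, any admissible parametrization) is a V-translator *)
    (forall (a b : Rbar) (y th : R -> R) (th0 : R),
        regularN a b y th -> (forall s, inI a b s -> th s = th0) ->
        translatorN a b y th)
    /\
    (* the curves alpha(s) = (c(1 + cos(sqrt2 (s - s0))), s), (s-s0)/sqrt2 in (-pi/2, pi/2),
       generate V-translators *)
    (forall c s0 : R, 0 < c ->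
        let a := Finite (s0 - PI / sqrt 2) in
        let b := Finite (s0 + PI / sqrt 2) in
        let y := fun s => c * (1 + cos (sqrt 2 * (s - s0))) in
        let th := fun s : R => s in
        regularN a b y th /\ translatorN a b y th)
    /\
    (* and these are the only ones *)
    (forall (a b : Rbar) (y th : R -> R),
        Rbar_lt a b -> regularN a b y th -> translatorN a b y th ->
        (exists th0 : R, forall s, inI a b s -> th s = th0)
        \/
        (exists c s0 : R, 0 < c /\
           forall s, inI a b s ->
             - (PI / 2) < (th s - s0) / sqrt 2 < PI / 2 /\
             y s = c * (1 + cos (sqrt 2 * (th s - s0))))) )
  /\
  (* (2) A-invariant V-translators *)
  ( (forall (a b : Rbar) (x th : R -> R) (th0 : R),
        regularA a b x th -> (forall s, inI a b s -> th s = th0) ->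
        translatorA a b x th)
    /\
    (forall (a b : Rbar) (x th : R -> R),
        regularA a b x th -> (forall s, inI a b s -> x s = 0) ->
        translatorA a b x th)
    /\
    (forall (a b : Rbar) (x th : R -> R),
        Rbar_lt a b -> regularA a b x th -> translatorA a b x th ->
        (exists th0 : R, forall s, inI a b s -> th s = th0)
        \/
        (forall s, inI a b s -> x s = 0)) )
  /\
  (* (3) rotational V-translators *)
  (forall (a b : Rbar) (x y phi : R -> R),
      (forall s, inI a b s ->
         ex_derive x s /\ ex_derive y s /\ ex_derive phi s /\ 0 < y s /\
         Derive x s = 2 * y s * cos (phi s) /\
         Derive y s = 2 * y s * sin (phi s)) ->
      translatorR a b x y phi ->
      forall s, inI a b s ->
        Derive phi s = - ((y s * cos (phi s) + x s * sin (phi s)) / y s)).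
Proof.
  split; [split; [exact part1a | split; [exact part1b | exact part1c]] | split; [split; [exact part2a | split; [exact part2b | exact part2c]] | exact part3]].
Qed.
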